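(* Let $d\ge 2$ and $n\ge 2$ be integers, let $k\ge 0$ be such that $n_k\le n<n_{k+1}$, and let $\lambda(n)=(l_{k+1},l_k,\ldots,l_0)$. Then $$\Delta W(D_{n,d};q)=\sum_{i=0}^k d^iq^{2i+1}+\sum_{i=0}^{k'}d^i(l_i+1)q^{2i+2},$$ where $k'=k-1$ if $n_k\le n<m_k$ and $k'=k$ if $m_k\le n<n_{k+1}$.
   Context: For a connected graph $G$, $W(G;q)=\sum_{\{u,v\}}q^{d(u,v)}$ over unordered pairs of distinct vertices, $d$ the graph distance. The $d$-ary dendrimer $D_{n,d}$ is the tree on vertex set $\{1,\ldots,n\}$ defined inductively: $D_{1,d}$ is the single vertex $1$, and $D_{n,d}$ is obtained from $D_{n-1,d}$ by attaching a new leaf $n$ to the smallest-numbered vertex of $D_{n-1,d}$ having degree $\le d$. Set $\Delta W(D_{n,d};q)=W(D_{n,d};q)-W(D_{n-1,d};q)$. Define $n_k=2+(d+1)\frac{d^k-1}{d-1}$ and $m_k=3+2d\frac{d^k-1}{d-1}$ for $k\ge0$. For a vertex $m$ with $n_k\le m<n_{k+1}$, its label is $\lambda(m)=(l_{k+1},l_k,\ldots,l_0)$ where $0\le l_i<d$ and $\sum_{i=0}^{k+1}l_id^i=m-n_k+(d-1)d^k$ (the base-$d$ digits, possibly with a leading zero). *)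

(* Defs.v *)
From mathcomp Require Import all_boot all_order all_algebra.
Set Implicit Arguments. Unset Strict Implicit. Unset Printing Implicit Defensive.
Import GRing.Theory.
Local Open Scope ring_scope.

(* The d-ary dendrimer D_{n,d}: vertices 1..n.  [pars d n] is the list
   [:: p_2; ...; p_n] where p_m is the vertex to which leaf m was attached. *)

Definition deg_in (n : nat) (s : seq nat) (v : nat) : nat :=
  (count (pred1 v) s + ((1 < v) && (v <= n)))%N.

Fixpoint pars (d n : nat) : seq nat :=
  match n with
  | 0 => [::]
  | n'.+1 =>
      let s := pars d n' in
      if n' is 0 then [::]
      else
        rcons s (nth 0%N (iota 1 n') (find (fun v => deg_in n' s v <= d)%N (iota 1 n')))
  end.

Definition par (d n m : nat) : nat := nth 0%N (pars d n) (m - 2).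

Definition adj (d n u v : nat) : bool :=
  has (fun m => ((u == m) && (v == par d n m)) || ((v == m) && (u == par d n m)))
      (iota 2 (n - 1)).

Fixpoint within (d n k u v : nat) : bool :=
  match k with
  | 0 => u == v
  | k'.+1 => within d n k' u v ||
             has (fun w => adj d n w v && within d n k' u w) (iota 1 n)
  end.

(* graph distance in D_{n,d} (the least k with v within k of u; the tree is
   connected on n vertices so this k is < n) *)
Definition dist (d n u v : nat) : nat := find (fun k => within d n k u v) (iota 0 n).

Definition W (d n : nat) : {poly int} :=
  \sum_(u < n.+1) \sum_(v < n.+1 | (0 < u)%N && (u < v)%N) 'X^(dist d n u v).

Definition DeltaW (d n : nat) : {poly int} := W d n - W d n.-1.

Definition nk (d k : nat) : nat := (2 + (d + 1) * ((d ^ k - 1) %/ (d - 1)))%N.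
Definition mk (d k : nat) : nat := (3 + 2 * d * ((d ^ k - 1) %/ (d - 1)))%N.

Definition label (d k m i : nat) : nat :=
  (((m - nk d k + (d - 1) * d ^ k) %/ d ^ i) %% d)%N.

(* Main.v *)
Require Import Defs.
From mathcomp Require Import all_boot all_order all_algebra zify ring.
Set Implicit Arguments. Unset Strict Implicit. Unset Printing Implicit Defensive.


Section Tree.
Variable d : nat.
Hypothesis d2 : (2 <= d)%N.

Definition fp (m : nat) : nat := ((m - 3) %/ d + 1)%N.

Lemma fp_ge1 m : (1 <= fp m)%N.
Proof. by rewrite /fp addn1. Qed.

Lemma fp_lt m : (2 <= m)%N -> (fp m < m)%N.
Proof.
move=> hm; rewrite /fp.
have : ((m - 3) %/ d <= m - 3)%N by apply: leq_div.
lia.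
Qed.

Lemma fp_le m : (1 <= m)%N -> (fp m <= m)%N.
Proof.
move=> hm; case: (ltnP 1 m) => h; first by have := fp_lt h; lia.
have -> : m = 1 by lia.
by rewrite /fp /= div0n.
Qed.

Fixpoint tdf (fuel u v : nat) : nat :=
  match fuel with
  | 0 => 0
  | fuel'.+1 => if u == v then 0 else if (u < v)%N then (tdf fuel' u (fp v)).+1
                else (tdf fuel' (fp u) v).+1
  end.

Definition td u v := tdf (u + v) u v.

Lemma tdf_enough F1 F2 u v : (1 <= u)%N -> (1 <= v)%N -> (u + v <= F1)%N -> (u + v <= F2)%N ->
  tdf F1 u v = tdf F2 u v.
Proof.
elim: F1 F2 u v => [|F1 IH] [|F2] u v hu hv h1 h2 //=; try lia.
case: eqP => // huv; case: ltnP => huv2; congr S; apply: IH; try lia; try apply fp_ge1.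
  have := fp_lt (m:=v); lia.
  have := fp_lt (m:=v); lia.
  have := fp_lt (m:=u); lia.
  have := fp_lt (m:=u); lia.
Qed.

Lemma td_eq u v : (1 <= u)%N -> (1 <= v)%N ->
  td u v = if u == v then 0 else if (u < v)%N then (td u (fp v)).+1 else (td (fp u) v).+1.
Proof.
move=> hu hv; rewrite /td.
have -> : (u + v = (u + v).-1.+1)%N by lia.
rewrite /=; case: eqP => // huv; case: ltnP => h; congr S; apply: tdf_enough => //; try apply fp_ge1.
  have := fp_lt (m:=v); lia.
  have := fp_lt (m:=u); lia.
Qed.

Lemma td_sym u v : (1 <= u)%N -> (1 <= v)%N -> td u v = td v u.
Proof.
move=> hu hv; move: {2}(u + v)%N (leqnn (u + v)) => N.
elim: N u v hu hv => [|N IH] u v hu hv hN; first lia.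
rewrite td_eq // [td v u]td_eq // eq_sym.
case: eqP => // huv; case: (ltngtP u v) => h //; try lia; congr S; apply: IH => //; try apply fp_ge1.
  have := fp_lt (m:=v); lia.
  have := fp_lt (m:=u); lia.
Qed.

Lemma td_refl u : (1 <= u)%N -> td u u = 0.
Proof. by move=> hu; rewrite td_eq // eqxx. Qed.

Lemma td_bound u v : (1 <= u)%N -> (1 <= v)%N -> (td u v <= maxn u v - 1)%N.
Proof.
move=> hu hv; move: {2}(u + v)%N (leqnn (u + v)) => N.
elim: N u v hu hv => [|N IH] u v hu hv hN; first lia.
rewrite td_eq //; case: eqP => huv; first lia.
case: ltnP => h.
  have h1 := fp_lt (m:=v); have h2 := IH u (fp v) hu (fp_ge1 _).
  lia.
have h1 := fp_lt (m:=u); have h2 := IH (fp u) v (fp_ge1 _) hv.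
lia.
Qed.

Fixpoint ancf (fuel a x : nat) : bool :=
  match fuel with
  | 0 => x == a
  | fuel'.+1 => (x == a) || ((1 < x)%N && ancf fuel' a (fp x))
  end.

Definition anc a x := ancf x a x.

Lemma ancf_enough F1 F2 a x : (x <= F1)%N -> (x <= F2)%N -> ancf F1 a x = ancf F2 a x.
Proof.
elim: F1 F2 x => [|F1 IH] [|F2] x h1 h2 //=.
- have -> : x = 0 by lia.
  by rewrite /= orbF.
- have -> : x = 0 by lia.
  by rewrite /= orbF.
case: (ltnP 1 x) => hx //=; rewrite (IH F2) //; have := fp_lt (m:=x); lia.
Qed.

Lemma anc_eq a x : anc a x = (x == a) || ((1 < x)%N && anc a (fp x)).
Proof.
rewrite /anc; case: x => [|x]; first by rewrite /= orbF.
rewrite [in LHS]/=; case: (ltnP 1 x.+1) => hx //=.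
by rewrite (@ancf_enough x (fp x.+1)) //; have := fp_lt hx; lia.
Qed.

Lemma anc_le a x : anc a x -> (a <= x)%N.
Proof.
move: {2}x (leqnn x) => N; elim: N x => [|N IH] x hx; rewrite anc_eq.
  have -> : x = 0 by lia.
  by move=> /orP [/eqP ->|] //.
case/orP => [/eqP -> //| /andP [h1 h2]].
have h3 := fp_lt (m:=x); have := IH (fp x); lia.
Qed.

Lemma td_fp u v : (1 <= u)%N -> (2 <= v)%N ->
  if anc v u then td u (fp v) = (td u v).+1 else td u v = (td u (fp v)).+1.
Proof.
move=> hu hv; move: {2}u (leqnn u) hu => N; elim: N u => [|N IH] u hN hu; first lia.
have hfv := fp_lt hv.
have hv1 : (1 <= v)%N by lia.
case: (ltngtP u v) => h.
- have -> : anc v u = false by apply/negP => /anc_le; lia.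
  rewrite (td_eq hu hv1) h ifN //; apply/eqP; lia.
- have hu2 : (1 < u)%N by lia.
  rewrite anc_eq hu2 /= (_ : (u == v) = false); last by apply/negbTE/eqP; lia.
  rewrite (td_eq hu hv1) (td_eq hu (fp_ge1 v)).
  rewrite (_ : (u == v) = false); last by apply/negbTE/eqP; lia.
  rewrite (_ : (u == fp v) = false); last by apply/negbTE/eqP; lia.
  rewrite (_ : (u < v)%N = false); last by apply/negbTE; lia.
  rewrite (_ : (u < fp v)%N = false); last by apply/negbTE; lia.
  have h1 := fp_lt hu2.
  have := IH (fp u) ltac:(lia) (fp_ge1 u).
  by case: (anc v (fp u)) => [->|->].
- subst u; rewrite anc_eq eqxx /= td_refl //.
  rewrite (td_eq hv1 (fp_ge1 v)) ifN; last by apply/eqP; lia.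
  rewrite (_ : (v < fp v)%N = false); last by apply/negbTE; lia.
  by rewrite td_refl ?fp_ge1.
Qed.

End Tree.


Lemma count_iota_int lo hi s len :
  count (fun m => (lo <= m) && (m < hi))%N (iota s len) = (minn hi (s + len) - maxn lo s)%N.
Proof.
elim: len s => [|len IH] s /=; first lia.
rewrite IH; case: (lo <= s)%N / leP => h1; case: (s < hi)%N / ltP => h2 /=; lia.
Qed.

Lemma find_iota (P : pred nat) a len t :
  (forall j, (a <= j)%N -> (j < t)%N -> ~~ P j) -> P t -> (a <= t)%N -> (t < a + len)%N ->
  find P (iota a len) = (t - a)%N.
Proof.
elim: len a => [|len IH] a h1 h2 h3 h4 /=; first lia.
case: (ltngtP a t) => h.
- rewrite (negbTE (h1 a (leqnn a) h)) IH //; try lia.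
  by move=> j hj hj2; apply: h1 => //; lia.
- lia.
- by subst t; rewrite h2 subnn.
Qed.

Section Pars.
Variable d : nat.
Hypothesis d2 : (2 <= d)%N.

Lemma fp_eq_int m v : (2 <= m)%N -> (1 <= v)%N ->
  (fp d m == v) = ((if v == 1 then 0 else d * (v - 1) + 3) <= m)%N && (m < d * v + 3)%N.
Proof.
move=> hm hv; rewrite /fp.
have hd : (0 < d)%N by lia.
have e1 : ((m - 3) %/ d + 1 == v) = ((v - 1 <= (m - 3) %/ d) && ((m - 3) %/ d < v))%N.
  by move: ((m - 3) %/ d) => x; apply/eqP/andP => [<-|[h1 h2]]; lia.
rewrite e1 leq_divRL // ltn_divLR //.
have e2 : (d * v = d * (v - 1) + d)%N by rewrite -mulnSr; congr muln; lia.
case: (v =P 1) => hv1.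
  subst v; rewrite subnn mul0n mul1n muln1.
  by apply/andP/andP => [[h1 h2]|[h1 h2]]; lia.
have c1 := mulnC (v - 1) d; have c2 := mulnC v d.
have c3 : (d <= (v - 1) * d)%N by rewrite leq_pmull //; lia.
by apply/andP/andP => [[h1 h2]|[h1 h2]]; lia.
Qed.

Lemma pars_eq n : (1 <= n)%N -> pars d n = map (fp d) (iota 2 (n - 1)).
Proof.
elim: n => [|n IH] hn //.
case: n IH hn => [|n] IH hn //.
have E : pars d n.+2 = rcons (pars d n.+1) (nth 0 (iota 1 n.+1)
   (find (fun v => deg_in n.+1 (pars d n.+1) v <= d)%N (iota 1 n.+1))) by [].
rewrite E IH //.
have -> : (n.+2 - 1 = (n.+1 - 1) + 1)%N by lia.
rewrite iotaD map_cat -cats1 [map _ (iota _ 1)]/= (_ : (2 + (n.+1 - 1) = n.+2)%N); last by lia.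
congr (_ ++ [:: _]).
set s := map (fp d) (iota 2 (n.+1 - 1)).
set p := fp d n.+2.
have hd : (0 < d)%N by lia.
have hp1 : (1 <= p)%N by apply: fp_ge1.
have hq := leq_trunc_div (n.+2 - 3) d.
have hq2 : (n.+2 - 3 < ((n.+2 - 3) %/ d).+1 * d)%N by rewrite -ltn_divLR // ltnS.
have hpd : p = ((n.+2 - 3) %/ d + 1)%N by [].
have hpn : (p <= n.+1)%N.
  have := fp_lt d2 (m:=n.+2); rewrite -/p; lia.
have deg_eq v : (1 <= v)%N -> deg_in n.+1 s v =
    (minn (d * v + 3) (n.+2) - maxn (if v == 1 then 0 else d * (v - 1) + 3) 2
     + ((1 < v) && (v <= n.+1)))%N.
  move=> hv; rewrite /deg_in /s count_map.
  rewrite (eq_in_count (a2 := fun m => ((if v == 1 then 0 else d * (v - 1) + 3) <= m)%N && (m < d * v + 3)%N)).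
    by rewrite count_iota_int; congr (_ - _ + _)%N; lia.
  by move=> m; rewrite mem_iota => /andP [h1 h2] /=; rewrite fp_eq_int //.
rewrite (@find_iota _ 1 n.+1 p) //.
- rewrite nth_iota; lia.
- move=> j hj hjp; rewrite deg_eq // -ltnNge.
  have hjq : (j <= (n.+2 - 3) %/ d)%N by lia.
  have hjd : (j * d <= ((n.+2 - 3) %/ d) * d)%N by rewrite leq_mul2r hjq orbT.
  have e2 : (d * j = d * (j - 1) + d)%N by rewrite -mulnSr; congr muln; lia.
  rewrite [(d * j)%N]mulnC in e2 *.
  case: eqP => hj1; lia.
- rewrite deg_eq //.
  have e2 : (d * p = d * (p - 1) + d)%N by rewrite -mulnSr; congr muln; lia.
  have e3 : (p - 1 = (n.+2 - 3) %/ d)%N by lia.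
  rewrite e3 [(d * _)%N]mulnC in e2 *.
  case: eqP => hj1; lia.
Qed.

End Pars.


Section Dist.
Variable d : nat.
Hypothesis d2 : (2 <= d)%N.

Lemma par_eq n m : (2 <= m <= n)%N -> par d n m = fp d m.
Proof.
move=> /andP [h1 h2]; rewrite /par pars_eq //; last lia.
rewrite (nth_map 0); last by rewrite size_iota; lia.
rewrite nth_iota; [congr fp; lia | lia].
Qed.

Lemma adj_inv n w v : adj d n w v -> exists m, (2 <= m <= n)%N /\
  ((w = m /\ v = fp d m) \/ (v = m /\ w = fp d m)).
Proof.
case/hasP => m; rewrite mem_iota => hm /orP [/andP [/eqP h1 /eqP h2]|/andP [/eqP h1 /eqP h2]];
  exists m; (split; first lia); rewrite par_eq in h2; try lia; by [left|right].
Qed.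

Lemma adj_up n v : (2 <= v <= n)%N -> adj d n (fp d v) v /\ adj d n v (fp d v).
Proof.
move=> hv; have hp := par_eq hv.
split; apply/hasP; exists v; rewrite ?mem_iota ?hp ?eqxx ?orbT //; lia.
Qed.

Lemma within_mono n k u v : within d n k u v -> within d n k.+1 u v.
Proof. by move=> h /=; rewrite h. Qed.

Lemma within_td n k u v : (1 <= u <= n)%N -> (1 <= v <= n)%N ->
  within d n k u v -> (td d u v <= k)%N.
Proof.
move=> hu; elim: k v => [|k IH] v hv /=.
  by move=> /eqP ->; rewrite td_refl //; lia.
case/orP => [/(IH v hv) h|]; first lia.
case/hasP => w; rewrite mem_iota => hw /andP [ha hwi].
have := IH w ltac:(lia) hwi => htw.
case: (adj_inv ha) => m [hm [[e1 e2]|[e1 e2]]]; subst.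
  have := td_fp d2 (u:=u) (v:=m) ltac:(lia) ltac:(lia).
  by case: anc => e; lia.
have := td_fp d2 (u:=u) (v:=m) ltac:(lia) ltac:(lia).
by case: anc => e; lia.
Qed.

Lemma withinS n k x y : within d n k.+1 x y =
  within d n k x y || has (fun w => adj d n w y && within d n k x w) (iota 1 n).
Proof. by []. Qed.

Lemma within_pre n k a b a' : within d n k a b -> adj d n a' a -> (1 <= a' <= n)%N ->
  within d n k.+1 a' b.
Proof.
elim: k b => [|k IH] b.
  move=> /eqP -> ha ha'; rewrite withinS; apply/orP; right; apply/hasP; exists a'.
    by rewrite mem_iota; lia.
  by rewrite ha /= eqxx.
rewrite withinS => /orP [h|/hasP [w hw /andP [h1 h2]]] ha ha'; rewrite withinS.
  by rewrite (IH b h ha ha').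
apply/orP; right; apply/hasP; exists w => //; rewrite h1 /=.
exact: IH.
Qed.

Lemma td_within n k u v : (1 <= u <= n)%N -> (1 <= v <= n)%N ->
  (td d u v <= k)%N -> within d n k u v.
Proof.
elim: k u v => [|k IH] u v hu hv.
  rewrite td_eq; try lia; case: eqP => [-> _|_]; first by rewrite /= eqxx.
  by case: ifP.
rewrite td_eq; try lia; case: eqP => [-> _|huv].
  by elim: (k.+1) => [|j IHj] /=; rewrite ?eqxx ?IHj.
have hfu := fp_ge1 d u; have hfv := fp_ge1 d v.
case: ltnP => h ht.
  have hv2 : (2 <= v)%N by lia.
  have hf := fp_lt d2 hv2.
  have := IH u (fp d v) hu ltac:(lia) ltac:(lia) => hw.
  apply/orP; right; apply/hasP; exists (fp d v); first by rewrite mem_iota; lia.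
  apply/andP; split; [exact: (adj_up (n:=n) (v:=v) ltac:(lia)).1 | exact: hw].
have hu2 : (2 <= u)%N by lia.
have hf := fp_lt d2 hu2.
have := IH (fp d u) v ltac:(lia) hv ltac:(lia) => hw.
have hadj : adj d n u (fp d u) by apply: (adj_up (n:=n) (v:=u) _).2; lia.
exact: (within_pre hw hadj hu).
Qed.

Lemma dist_eq n u v : (1 <= u <= n)%N -> (1 <= v <= n)%N -> dist d n u v = td d u v.
Proof.
move=> hu hv; rewrite /dist.
rewrite (eq_find (a2 := fun k => (td d u v <= k)%N)); last first.
  move=> k; apply/idP/idP; [exact: within_td | exact: td_within].
have hb := td_bound d2 (u:=u) (v:=v) ltac:(lia) ltac:(lia).
rewrite (@find_iota _ 0 n (td d u v)) ?subn0 //; try lia.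
Qed.

End Dist.


Section Arith.
Variable d : nat.
Hypothesis d2 : (2 <= d)%N.

Definition S k := (\sum_(i < k) d ^ i)%N.

Lemma S_succ k : S k.+1 = (1 + d * S k)%N.
Proof. by rewrite /S big_ord_recl expn0 big_distrr /=; congr addn; apply: eq_bigr => i _; rewrite expnS. Qed.

Lemma powS k : (d ^ k = 1 + (d - 1) * S k)%N.
Proof.
elim: k => [|k IH]; first by rewrite /S big_ord0 muln0.
rewrite S_succ expnS IH mulnDr muln1 mulnCA.
move: ((d - 1) * S k)%N => x; rewrite mulnDr muln1; lia.
Qed.

Lemma geo k : ((d ^ k - 1) %/ (d - 1) = S k)%N.
Proof. rewrite powS addKn mulnC mulnK //; lia. Qed.

Lemma nkE k : nk d k = (2 + (d + 1) * S k)%N.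
Proof. by rewrite /nk geo. Qed.

Lemma mkE k : mk d k = (nk d k + d ^ k)%N.
Proof. rewrite /mk nkE geo powS mulnDl mul1n; have := mulnA 2 d (S k); lia. Qed.

Lemma nk_ge2 k : (2 <= nk d k)%N.
Proof. rewrite nkE; lia. Qed.

Lemma nk_succ k : nk d k.+1 = (3 + d * (nk d k - 1))%N.
Proof.
rewrite !nkE S_succ.
rewrite (_ : (2 + (d + 1) * S k - 1 = 1 + (d + 1) * S k)%N); last lia.
rewrite !mulnDr !muln1; have := mulnCA (d + 1) d (S k); lia.
Qed.

Lemma nk0 : nk d 0 = 2.
Proof. by rewrite nkE /S big_ord0 muln0. Qed.

Lemma nk1 : nk d 1 = (d + 3)%N.
Proof. rewrite nk_succ nk0 muln1; lia. Qed.

Lemma mk0 : mk d 0 = 3.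
Proof. by rewrite mkE nk0 expn0. Qed.

Definition lvl k x := (nk d k <= x < nk d k.+1)%N.

Lemma fp_lvl k x : lvl k.+1 x -> lvl k (fp d x).
Proof.
rewrite /lvl /fp => /andP [h1 h2].
have hd : (0 < d)%N by lia.
have e1 := nk_succ k; have e2 := nk_succ k.+1.
have g1 : ((nk d k - 1) * d <= x - 3)%N.
  by rewrite mulnC; move: (d * (nk d k - 1))%N e1 => P e1; lia.
have g2 : (x - 3 < (nk d k.+1 - 1) * d)%N.
  rewrite mulnC; move: (d * (nk d k.+1 - 1))%N e2 => P e2.
  move: (d * (nk d k - 1))%N e1 => P' e1; lia.
rewrite -leq_divRL // in g1; rewrite -ltn_divLR // in g2.
have := nk_ge2 k; lia.
Qed.

Lemma fp_lvl0 x : lvl 0 x -> fp d x = 1.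
Proof.
rewrite /lvl nk0 nk1 /fp => /andP [h1 h2].
by rewrite divn_small //; lia.
Qed.

Lemma lvl_iter k x : lvl k x -> iter k.+1 (fp d) x = 1 /\ forall i, (i <= k)%N -> (2 <= iter i (fp d) x)%N.
Proof.
elim: k x => [|k IH] x hx.
  split; first by rewrite /= fp_lvl0.
  move=> i; rewrite leqn0 => /eqP -> /=; move: hx; rewrite /lvl nk0; lia.
have [h1 h2] := IH _ (fp_lvl hx).
split; first by rewrite iterSr.
case=> [|i] hi.
  move: hx; rewrite /lvl => /andP [hx _]; have := nk_ge2 k.+1; rewrite /=; lia.
by rewrite iterSr; apply: h2.
Qed.

Lemma iter_ge1 j y : (1 <= y)%N -> (1 <= iter j (fp d) y)%N.
Proof. by case: j => [|j] //= _; apply: fp_ge1. Qed.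

Lemma iter_le j y : (1 <= y)%N -> (iter j (fp d) y <= y)%N.
Proof.
move=> hy; elim: j => [|j IH] //=.
have := fp_le d2 (iter_ge1 j hy); lia.
Qed.

Lemma iter_lt j x : (2 <= x)%N -> (iter j.+1 (fp d) x < x)%N.
Proof.
move=> hx; rewrite iterSr; have := iter_le j (fp_ge1 d x); have := fp_lt d2 hx; lia.
Qed.

Lemma td_iter i x : (forall j, (j < i)%N -> (2 <= iter j (fp d) x)%N) -> (1 <= x)%N ->
  td d (iter i (fp d) x) x = i.
Proof.
elim: i x => [|i IH] x hj hx; first by rewrite td_refl.
have hx2 : (2 <= x)%N by have := hj 0 isT.
have hl := iter_lt i hx2.
rewrite td_eq ?iter_ge1 //.
rewrite ifN; last by apply/eqP; lia.
rewrite hl iterSr IH ?fp_ge1 //.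
by move=> j hj2; rewrite -iterSr; apply: hj.
Qed.

Lemma shiftM k n : lvl k.+1 n ->
  (fp d n - nk d k + (d - 1) * d ^ k = (n - nk d k.+1 + (d - 1) * d ^ k.+1) %/ d)%N.
Proof.
rewrite /lvl => /andP [h1 h2].
have hd : (0 < d)%N by lia.
have e : (n - 3 = (nk d k - 1) * d + (n - nk d k.+1))%N.
  have e0 := nk_succ k; rewrite (mulnC (nk d k - 1) d); move: (d * (nk d k - 1))%N e0 => P e0; lia.
rewrite /fp e (divnMDl (nk d k - 1) (n - nk d k.+1) hd).
rewrite expnSr mulnA [(n - nk d k.+1 + _)%N]addnC (divnMDl ((d - 1) * d ^ k) (n - nk d k.+1) hd).
have := nk_ge2 k; move: ((d - 1) * d ^ k)%N ((n - nk d k.+1) %/ d)%N => Y X; lia.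
Qed.

Lemma lab_shift k n i : lvl k.+1 n -> label d k.+1 n i.+1 = label d k (fp d n) i.
Proof.
move=> h; rewrite /label (shiftM h) [d ^ i.+1]expnS divnMA //.
Qed.

Lemma lab0 k n : lvl k.+1 n -> label d k.+1 n 0 = ((n - 3) %% d)%N.
Proof.
rewrite /lvl => /andP [h1 h2].
have e : (n - 3 = (nk d k - 1) * d + (n - nk d k.+1))%N.
  have e0 := nk_succ k; rewrite (mulnC (nk d k - 1) d); move: (d * (nk d k - 1))%N e0 => P e0; lia.
rewrite /label expn0 divn1 e modnMDl expnSr mulnA [(n - nk d k.+1 + _)%N]addnC modnMDl //.
Qed.

Lemma mk_shift k n : lvl k.+1 n -> (n < mk d k.+1)%N = (fp d n < mk d k)%N.
Proof.
move=> h; have h' := fp_lvl h; move: h h'; rewrite /lvl => /andP [h1 h2] /andP [h3 h4].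
have hd : (0 < d)%N by lia.
have e : (n - 3 = (nk d k - 1) * d + (n - nk d k.+1))%N.
  have e0 := nk_succ k; rewrite (mulnC (nk d k - 1) d); move: (d * (nk d k - 1))%N e0 => P e0; lia.
have ef : (fp d n - nk d k = (n - nk d k.+1) %/ d)%N.
  rewrite /fp e (divnMDl (nk d k - 1) (n - nk d k.+1) hd); have := nk_ge2 k.
  move: ((n - nk d k.+1) %/ d)%N => X; lia.
rewrite !mkE.
have -> : (n < nk d k.+1 + d ^ k.+1)%N = (n - nk d k.+1 < d ^ k.+1)%N.
  by move: (d ^ k.+1)%N => Y; apply/idP/idP; lia.
have -> : (fp d n < nk d k + d ^ k)%N = (fp d n - nk d k < d ^ k)%N.
  by move: (d ^ k)%N (fp d n) h3 => Y F h3; apply/idP/idP; lia.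
by rewrite ef ltn_divLR // expnSr.
Qed.

End Arith.

Import GRing.Theory.
Local Open Scope ring_scope.

Section WW.
Variable d : nat.
Hypothesis d2 : (2 <= d)%N.

Definition T (n : nat) : {poly int} := \sum_(1 <= u < n) 'X^(td d u n).

Definition Wt (N : nat) : {poly int} :=
  \sum_(u < N.+1) \sum_(v < N.+1 | (0 < u)%N && (u < v)%N) 'X^(td d u v).

Lemma W_eq N : W d N = Wt N.
Proof.
apply: eq_bigr => u _; apply: eq_bigr => v /andP [h1 h2].
have := ltn_ord u; have := ltn_ord v => hv hu.
by rewrite dist_eq //; lia.
Qed.

Lemma Wt_succ N : Wt N.+1 = Wt N + T N.+1.
Proof.
rewrite /Wt big_ord_recr /=.
rewrite [X in _ + X = _]big1; last first.
  by move=> v h; have := ltn_ord v; lia.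
rewrite addr0.
rewrite (eq_bigr (fun u : 'I_N.+1 => \sum_(v < N.+1 | (0 < u)%N && (u < v)%N) 'X^(td d u v)
    + (if (0 < u)%N then 'X^(td d u N.+1) else 0))); last first.
  move=> u _; rewrite big_mkcond big_ord_recr /= -big_mkcond /=.
  by rewrite (ltn_ord u) andbT.
rewrite big_split /=; congr (_ + _).
rewrite -big_mkcond /= -(big_mkord (fun u => (0 < u)%N) (fun u => 'X^(td d u N.+1))).
rewrite big_ltn_cond //= /T big_nat_cond [in RHS]big_nat_cond.
by apply: eq_bigl => u; case: (1 <= u)%N / leP => h //=; case: (u < N.+1)%N => //=; lia.
Qed.

Lemma DeltaW_T n : (2 <= n)%N -> DeltaW d n = T n.
Proof.
case: n => [|n] // hn; rewrite /DeltaW /= !W_eq Wt_succ; ring.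
Qed.

End WW.


Section Rec.
Variable d : nat.
Hypothesis d2 : (2 <= d)%N.

Lemma fp_in u w : (2 <= u)%N -> (1 <= w)%N -> ((w == 1) || (d * (w - 1) + 3 <= u))%N ->
  (u < d * w + 3)%N -> fp d u = w.
Proof.
move=> hu hw h1 h2; apply/eqP; rewrite fp_eq_int //.
rewrite h2 andbT; case: ifP => // /eqP hw1.
by move: h1; case: eqP.
Qed.

Lemma sum_block (G : nat -> {poly int}) a l w :
  (forall u, (a <= u < a + l)%N -> fp d u = w) ->
  \sum_(a <= u < a + l) G (fp d u) = G w *+ l.
Proof.
move=> h; rewrite (eq_big_nat _ _ (F2 := fun _ => G w)); last by move=> u hu; rewrite h.
by rewrite sumr_const_nat addKn.
Qed.

Lemma block (G : nat -> {poly int}) p l : (l <= d)%N ->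
  \sum_(2 <= u < d * p.+1 + 3 + l) G (fp d u) =
  G 1%N *+ d.+1 + (\sum_(2 <= w < p.+2) G w) *+ d + G p.+2 *+ l.
Proof.
elim: p l => [|p IH] l hl.
  rewrite muln1 (big_cat_nat _ (n := (d + 3)%N)) /=; try lia.
  rewrite (_ : (d + 3)%N = (2 + d.+1)%N); last lia.
  rewrite (@sum_block _ _ _ 1); last by move=> u hu; apply: fp_in => //; lia.
  rewrite (@sum_block _ _ _ 2); last first.
    move=> u hu; have f1 : (d * (2 - 1) = d)%N by rewrite muln1.
    have f2 : (d * 2 = d + d)%N by rewrite muln2 addnn.
    by apply: fp_in; rewrite ?f1 ?f2; lia.
  by rewrite big_geq // mul0rn addr0.
have e : (d * p.+2 = d * p.+1 + d)%N by rewrite mulnS addnC.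
rewrite e (_ : (d * p.+1 + d + 3 + l = (d * p.+1 + 3 + d) + l)%N); last lia.
rewrite (big_cat_nat _ (n := (d * p.+1 + 3 + d)%N)) /=; try lia.
rewrite IH // (@sum_block _ _ _ p.+3); last first.
  move=> u hu; have f1 : (d * (p.+3 - 1) = d * p.+1 + d)%N by rewrite subn1 /= e.
  have f2 : (d * p.+3 = d * p.+1 + d + d)%N by rewrite mulnS e addnC.
  apply: fp_in; rewrite ?f1 ?f2; move: (d * p.+1)%N hu => Q hu; lia.
rewrite [\sum_(2 <= w < p.+3) _]big_nat_recr //= mulrnDl.
by rewrite -!addrA; congr (_ + (_ + _)); rewrite addrC.
Qed.

Lemma sum_pick (H : nat -> {poly int}) a b x (Q : pred nat) :
  (a <= x < b)%N -> ~~ Q x ->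
  \sum_(a <= u < b | (x == u) || Q u) H u = H x + \sum_(a <= u < b | Q u) H u.
Proof.
move=> hx hQ.
rewrite (bigID (fun u => x == u)) /=.
congr (_ + _).
  rewrite (eq_bigl (fun u => u == x)); last first.
    by move=> u; rewrite eq_sym; case: (u == x); rewrite ?andbF ?andbT.
  by rewrite big_nat1_eq hx.
apply: eq_bigl => u; case: eqP => [<-|] /=; last by rewrite andbT.
by rewrite (negbTE hQ).
Qed.

Lemma anc_sum (H : nat -> {poly int}) j x N :
  iter j (fp d) x = 1%N -> (forall i, (i < j)%N -> (2 <= iter i (fp d) x)%N) -> (x < N)%N ->
  \sum_(2 <= u < N | anc d u x) H u = \sum_(i < j) H (iter i (fp d) x).
Proof.
elim: j x => [|j IH] x h1 h2 h3.
  rewrite /= in h1; subst x; rewrite big_ord0 big_nat_cond big_pred0 // => u.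
  rewrite (anc_eq d2) /= ?andbF ?orbF; apply/negbTE/negP => /andP [/andP [h _] /eqP e]; lia.
have hx : (2 <= x)%N by apply: (h2 0).
rewrite (eq_bigl (fun u => (x == u) || anc d u (fp d x))); last first.
  by move=> u; rewrite (anc_eq d2) hx.
rewrite sum_pick; try lia; last first.
  by apply/negP => /anc_le; have := fp_lt d2 hx; lia.
rewrite big_ord_recl /= IH //.
- by congr (_ + _); apply: eq_bigr => i _; rewrite add0n -iterS iterSr.
- by rewrite -iterSr.
- by move=> i hi; rewrite -iterSr; apply: h2.
- have := fp_lt d2 hx; lia.
Qed.

Lemma telesc j : \sum_(i < j) ('X^(i.+1) - 'X^2 * 'X^(i.+1) : {poly int}) =
  'X + 'X^2 - 'X^(j.+1) - 'X^(j.+2).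
Proof.
elim: j => [|j IH]; first by rewrite big_ord0 expr1; ring.
rewrite big_ord_recr /= IH !exprS; ring.
Qed.

End Rec.


Section Rec2.
Variable d : nat.
Hypothesis d2 : (2 <= d)%N.

Lemma T_rec k n : lvl d k.+1 n ->
  T d n = 'X + (((n - 3) %% d).+1)%:R * 'X^2 + (d%:R * 'X^2) * T d (fp d n).
Proof.
move=> hn.
have [hi1 hi2] := lvl_iter d2 hn.
have hP := fp_lvl d2 hn.
set P := fp d n in hP *.
have [hp1 hp2] := lvl_iter d2 hP.
have hn2 : (2 <= n)%N by apply: (hi2 0).
have hP2 : (2 <= P)%N by apply: (hp2 0).
have hPn : (P < n)%N by apply: fp_lt.
have hd : (0 < d)%N by lia.
set l := ((n - 3) %% d)%N.
have hl : (l <= d)%N by apply: ltnW; rewrite ltn_mod.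
have [p ep] : exists p, P = p.+2 by exists (P - 2)%N; lia.
have en : n = (d * p.+1 + 3 + l)%N.
  have h3 := divn_eq (n - 3) d.
  have : ((n - 3) %/ d = p.+1)%N by move: ep; rewrite /P /fp; lia.
  move=> e; rewrite e mulnC in h3; move: (d * p.+1)%N h3 => Q h3.
  rewrite /l; move: ((n - 3) %% d)%N h3 => L h3; lia.
have e1 : td d 1 n = k.+2.
  by have := @td_iter d d2 k.+2 n (fun j hj => hi2 j ltac:(lia)) ltac:(lia); rewrite hi1.
have e1P : td d 1 P = k.+1.
  by have := @td_iter d d2 k.+1 P (fun j hj => hp2 j ltac:(lia)) ltac:(lia); rewrite hp1.
rewrite /T big_ltn // e1.
rewrite (eq_big_nat _ _ (F2 := fun u => 'X^2 * 'X^(td d (fp d u) P) +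
   (if anc d u P then 'X^(td d (fp d u) P) - 'X^2 * 'X^(td d (fp d u) P) else 0))); last first.
  move=> u /andP [hu1 hu2].
  have hu : td d u n = (td d u P).+1.
    by rewrite td_eq; try lia; rewrite ifN; [rewrite hu2 | apply/eqP; lia].
  have := td_fp d2 (u:=P) (v:=u) ltac:(lia) ltac:(lia).
  rewrite hu (td_sym d2 (u:=u) (v:=P)); try lia.
  rewrite (td_sym d2 (u:=fp d u) (v:=P)) ?fp_ge1; try lia.
  case: (anc d u P) => ->.
    by rewrite addrC subrK.
  by rewrite addr0 -exprD.
rewrite big_split /= -mulr_sumr -big_mkcond /=.
have B := @block d d2 (fun w => 'X^(td d w P)) p l hl.
rewrite -en -ep /= in B.
rewrite B e1P td_refl; try lia.
rewrite (@anc_sum d d2 _ k.+1 P n hp1 (fun j hj => hp2 j ltac:(lia)) hPn).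
rewrite (eq_bigr (fun i : 'I_k.+1 => 'X^(i.+1) - 'X^2 * 'X^(i.+1))); last first.
  move=> i _; rewrite -iterS.
  by rewrite (@td_iter d d2 i.+1 P (fun j hj => hp2 j ltac:(have := ltn_ord i; lia)) ltac:(lia)).
rewrite telesc [\sum_(1 <= u < P) _]big_ltn // e1P expr0.
move: (\sum_(2 <= w < P) 'X^(td d w P)) => S.
rewrite (_ : (l.+1)%:R = l%:R + 1 :> {poly int}); last by rewrite -addn1 natrD.
rewrite !exprS expr0.
rewrite -[_ *+ d.+1]mulr_natr -[_ *+ d]mulr_natr.
ring.
Qed.

Lemma T_base n : lvl d 0 n -> T d n = 'X + (n - 2)%:R * 'X^2.
Proof.
rewrite /lvl (nk0 d2) (nk1 d2) => /andP [h1 h2].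
have hf : forall u, (2 <= u < d + 3)%N -> fp d u = 1%N.
  by move=> u hu; apply: fp_lvl0 => //; rewrite /lvl (nk0 d2) (nk1 d2).
rewrite /T big_ltn; last lia.
rewrite (eq_big_nat _ _ (F2 := fun _ => 'X^2)); last first.
  move=> u hu; rewrite td_eq; try lia.
  rewrite ifN; last by apply/eqP; lia.
  rewrite (_ : (u < n)%N = true); last lia.
  rewrite hf; last lia.
  rewrite td_eq; try lia. rewrite ifN; last by apply/eqP; lia.
  rewrite (_ : (u < 1)%N = false); last lia.
  by rewrite hf ?td_refl //; lia.
rewrite sumr_const_nat td_eq; try lia.
rewrite ifN; last by apply/eqP; lia.
rewrite (_ : (1 < n)%N = true); last lia.
rewrite hf; last lia.
by rewrite td_refl // mulr_natl expr1.
Qed.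

End Rec2.


Section RHS.
Variable d : nat.
Hypothesis d2 : (2 <= d)%N.

Definition Rhs k n : {poly int} :=
  \sum_(i < k.+1) ((d ^ i)%:R * 'X^(2 * i + 1))
    + \sum_(i < (if (n < mk d k)%N then k else k.+1))
        ((d ^ i * (label d k n i + 1))%:R * 'X^(2 * i + 2)).

Lemma Rhs_rec k n : lvl d k.+1 n ->
  Rhs k.+1 n = 'X + (((n - 3) %% d).+1)%:R * 'X^2 + (d%:R * 'X^2) * Rhs k (fp d n).
Proof.
move=> hn; rewrite /Rhs (mk_shift d2 hn).
set K := if (fp d n < mk d k)%N then k else k.+1.
have -> : (if (fp d n < mk d k)%N then k.+1 else k.+2) = K.+1 by rewrite /K; case: ifP.
rewrite [\sum_(i < k.+2) _]big_ord_recl [\sum_(i < K.+1) _]big_ord_recl /= (lab0 d2 hn) expn0 mul1n.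
rewrite [in LHS](eq_bigr (fun i : 'I_k.+1 => (d%:R * 'X^2) * ((d ^ i)%:R * 'X^(2 * i + 1)))); last first.
  move=> i _; rewrite /bump /= expnS natrM (_ : (2 * (1 + i) + 1 = 2 + (2 * i + 1))%N) ?exprD; last lia.
  ring.
rewrite [in RHS](eq_bigr (fun i : 'I_K => (d ^ i * (label d k.+1 n i.+1 + 1))%:R * 'X^(2 * i + 2))); last first.
  by move=> i _; rewrite (lab_shift d2 i hn).
rewrite [in LHS](eq_bigr (fun i : 'I_K => (d%:R * 'X^2) * ((d ^ i * (label d k.+1 n i.+1 + 1))%:R * 'X^(2 * i + 2)))); last first.
  move=> i _; rewrite /bump /= expnS -mulnA natrM (_ : (2 * (1 + i) + 2 = 2 + (2 * i + 2))%N) ?exprD; last lia.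
  ring.
rewrite -!mulr_sumr addn1 expr1 /=.
rewrite (_ : (2 * 0 + 2 = 2)%N) //.
ring.
Qed.

Lemma T_formula k n : lvl d k n -> T d n = Rhs k n.
Proof.
elim: k n => [|k IH] n hn.
  rewrite (T_base d2 hn) /Rhs (mk0 d2) big_ord1 expn0 mul1r /= expr1.
  move: hn; rewrite /lvl (nk0 d2) (nk1 d2) => /andP [h1 h2].
  case: ltnP => h3.
    by rewrite big_ord0 (_ : (n - 2 = 0)%N) ?mul0r ?addr0 //; lia.
  rewrite big_ord1 /= expn0 mul1n /label (nk0 d2) expn0 divn1 muln1.
  rewrite (_ : (n - 2 + (d - 1) = (n - 3) + d)%N); last lia.
  rewrite modnDr modn_small; last lia.
  by rewrite (_ : (n - 3 + 1 = n - 2)%N) //; lia.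
rewrite (T_rec d2 hn) (Rhs_rec hn) IH //.

by apply: fp_lvl.
Qed.

End RHS.

Unset Implicit Arguments.

Theorem lemma2p1 (d n k : nat) :
  (2 <= d)%N -> (2 <= n)%N -> (nk d k <= n)%N -> (n < nk d k.+1)%N ->
  DeltaW d n =
    \sum_(i < k.+1) ((d ^ i)%:R * 'X^(2 * i + 1))
    + \sum_(i < (if (n < mk d k)%N then k else k.+1))
        ((d ^ i * (label d k n i + 1))%:R * 'X^(2 * i + 2)).
Proof.
move=> d2 n2 h1 h2.
rewrite (DeltaW_T d2 n2).
have hl : lvl d k n by rewrite /lvl h1 h2.
exact: (T_formula d2 hl).
Qed.
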